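(* Let $\eta\in C^2(\mathbb T^N,(0,\infty))$, $0\le a\le b$, $L\ge0$, $i\in[1,N]$ and $k\ne i$. The measure with density $\eta$ belongs to $\mathcal M^{(i,k)}_{a,b,L}$ if and only if (i) $\eta(\cdot;\hat{\boldsymbol x}_i)\in\mathcal V_a$ for all $\hat{\boldsymbol x}_i\in\mathbb T^{N-1}$, and (ii) $A^{(i,k)}_{\eta,b}(\hat{\boldsymbol x}_i)-B^{(i,k)}_{\eta,b}(\hat{\boldsymbol x}_i)\le L$ for every $\hat{\boldsymbol x}_i\in\mathbb T^{N-1}$, where $$A^{(i,k)}_{\eta,b}(\hat{\boldsymbol x}_i):=\sup_{x\in\mathbb T}\max\Big\{\frac{\partial_k\eta}{\eta},\ \frac{b\partial_k\eta-\partial_k\partial_i\eta}{b\eta-\partial_i\eta},\ \frac{b\partial_k\eta+\partial_k\partial_i\eta}{b\eta+\partial_i\eta}\Big\}(x;\hat{\boldsymbol x}_i),$$ and $B^{(i,k)}_{\eta,b}(\hat{\boldsymbol x}_i)$ is defined by the same expression with $\sup_x\max$ replaced by $\inf_x\min$.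
   Context: $\mathbb T=\mathbb R/\mathbb Z$ with torus distance; $\boldsymbol x=(x_i;\hat{\boldsymbol x}_i)$ with $\hat{\boldsymbol x}_i\in\mathbb T^{N-1}$ the remaining coordinates. $\mathcal V_a:=\{\psi\in C^2(\mathbb T,(0,\infty)):|\frac d{dx}\log\psi|<a\}$; $\beta_a(\psi_1,\psi_2):=\inf\{t>0:t\psi_1-\psi_2\in\mathcal V_a\}$, $\theta_a(\psi_1,\psi_2):=\log\beta_a(\psi_1,\psi_2)+\log\beta_a(\psi_2,\psi_1)$. For a measure with density $\rho\in C^2(\mathbb T^N,(0,\infty))$, $\rho_{\hat{\boldsymbol x}_i}(x):=\rho(x;\hat{\boldsymbol x}_i)/\int\rho(s;\hat{\boldsymbol x}_i)ds$; it belongs to $\mathcal M^{(i,k)}_{a,b,L}$ iff $\rho_{\hat{\boldsymbol x}_i}\in\mathcal V_a$ for all $\hat{\boldsymbol x}_i$ and $\theta_b(\rho_{\hat{\boldsymbol x}_i},\rho_{\hat{\boldsymbol x}'_i})\le L|x_k-x'_k|$ whenever $\hat{\boldsymbol x}_i,\hat{\boldsymbol x}'_i$ differ only in their $k$-th coordinates $x_k,x'_k$. *)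

(* Defs.v *)
From Stdlib Require Import Reals Lra.
From Coquelicot Require Import Coquelicot.
Open Scope R_scope.

(* Points of R^N are represented as maps nat -> R; only the coordinates
   0 .. N-1 are relevant (see [torus_fun]).  Coordinates are 0-based. *)
Definition upd (y : nat -> R) (k : nat) (t : R) : nat -> R :=
  fun j => if Nat.eqb j k then t else y j.

Definition partial (k : nat) (f : (nat -> R) -> R) : (nat -> R) -> R :=
  fun y => Derive (fun t => f (upd y k t)) (y k).

(* f is a function on the torus T^N = (R/Z)^N : it depends only on the
   first N coordinates and is 1-periodic in each of them *)
Definition torus_fun (N : nat) (f : (nat -> R) -> R) : Prop :=
  (forall x y, (forall j, (j < N)%nat -> x j = y j) -> f x = f y) /\
  (forall x j, (j < N)%nat -> f (upd x j (x j + 1)) = f x).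

Definition contN (N : nat) (f : (nat -> R) -> R) : Prop :=
  forall x eps, 0 < eps -> exists delta, 0 < delta /\
    forall y, (forall j, (j < N)%nat -> Rabs (y j - x j) < delta) ->
      Rabs (f y - f x) < eps.

Definition C2N (N : nat) (f : (nat -> R) -> R) : Prop :=
  contN N f /\
  forall j l, (j < N)%nat -> (l < N)%nat ->
    (forall x, ex_derive (fun t => f (upd x j t)) (x j)) /\
    (forall x, ex_derive (fun t => partial j f (upd x l t)) (x l)) /\
    contN N (partial j f) /\ contN N (partial l (partial j f)).

Definition C2T (psi : R -> R) : Prop :=
  (forall s, psi (s + 1) = psi s) /\
  forall s, ex_derive psi s /\ ex_derive (Derive psi) s /\
            continuous (Derive (Derive psi)) s.

Definition Va (a : R) (psi : R -> R) : Prop :=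
  C2T psi /\ (forall s, 0 < psi s) /\
  forall s, Rabs (Derive (fun y => ln (psi y)) s) < a.

(* beta_a(psi1,psi2) = inf {t > 0 : t psi1 - psi2 in V_a}  (inf of empty = +oo) *)
Definition beta (a : R) (psi1 psi2 : R -> R) : Rbar :=
  Glb_Rbar (fun t => 0 < t /\ Va a (fun s => t * psi1 s - psi2 s)).

(* theta_a = log beta_a(psi1,psi2) + log beta_a(psi2,psi1), with log(+oo)=+oo *)
Definition theta (a : R) (psi1 psi2 : R -> R) : Rbar :=
  match beta a psi1 psi2, beta a psi2 psi1 with
  | Finite u, Finite v => Finite (ln u + ln v)
  | _, _ => p_infty
  end.

Definition tdist (s t : R) : R :=
  Rmin (frac_part (s - t)) (1 - frac_part (s - t)).

(* the slice eta(. ; hat x_i) (coordinate i of x is overwritten) *)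
Definition slice (i : nat) (eta : (nat -> R) -> R) (x : nat -> R) : R -> R :=
  fun s => eta (upd x i s).

Definition rho_cond (i : nat) (rho : (nat -> R) -> R) (x : nat -> R) : R -> R :=
  fun s => rho (upd x i s) / RInt (slice i rho x) 0 1.

Definition InM (i k : nat) (a b L : R) (rho : (nat -> R) -> R) : Prop :=
  (forall x, Va a (rho_cond i rho x)) /\
  (forall x x', (forall j, j <> k -> x j = x' j) ->
     Rbar_le (theta b (rho_cond i rho x) (rho_cond i rho x'))
             (Finite (L * tdist (x k) (x' k)))).

Definition quot_max (i k : nat) (b : R) (eta : (nat -> R) -> R)
  (x : nat -> R) (s : R) : R :=
  let y := upd x i s in
  Rmax (partial k eta y / eta y)
   (Rmax ((b * partial k eta y - partial k (partial i eta) y)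
            / (b * eta y - partial i eta y))
         ((b * partial k eta y + partial k (partial i eta) y)
            / (b * eta y + partial i eta y))).

Definition quot_min (i k : nat) (b : R) (eta : (nat -> R) -> R)
  (x : nat -> R) (s : R) : R :=
  let y := upd x i s in
  Rmin (partial k eta y / eta y)
   (Rmin ((b * partial k eta y - partial k (partial i eta) y)
            / (b * eta y - partial i eta y))
         ((b * partial k eta y + partial k (partial i eta) y)
            / (b * eta y + partial i eta y))).

Definition A_ik (i k : nat) (b : R) (eta : (nat -> R) -> R) (x : nat -> R) : Rbar :=
  Lub_Rbar (fun v => exists s, v = quot_max i k b eta x s).

Definition B_ik (i k : nat) (b : R) (eta : (nat -> R) -> R) (x : nat -> R) : Rbar :=
  Glb_Rbar (fun v => exists s, v = quot_min i k b eta x s).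

(* Main.v *)
Require Import Defs.
From Stdlib Require Import Reals Lra Lia FunctionalExtensionality.
From Coquelicot Require Import Coquelicot.
Open Scope R_scope.

Lemma upd_same y k t : upd y k t k = t.
Proof. unfold upd. now rewrite Nat.eqb_refl. Qed.

Lemma upd_other y k t j : j <> k -> upd y k t j = y j.
Proof. intro H. unfold upd. apply Nat.eqb_neq in H. now rewrite H. Qed.

Lemma upd_upd_same y k s t : upd (upd y k s) k t = upd y k t.
Proof. apply functional_extensionality. intro j. unfold upd.
  destruct (Nat.eqb j k); auto. Qed.

Lemma upd_comm y k i t s : k <> i -> upd (upd y k t) i s = upd (upd y i s) k t.
Proof. intro H. apply functional_extensionality. intro j. unfold upd.
  destruct (Nat.eqb_spec j i); destruct (Nat.eqb_spec j k); subst; auto.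
  congruence. Qed.

Lemma upd_id y k : upd y k (y k) = y.
Proof. apply functional_extensionality. intro j. unfold upd.
  destruct (Nat.eqb_spec j k); subst; auto. Qed.

Lemma ln_deriv (phi : R -> R) s : ex_derive phi s -> 0 < phi s ->
  Derive (fun y => ln (phi y)) s = Derive phi s / phi s.
Proof.
  intros Hd Hp. apply is_derive_unique.
  eapply is_derive_ext; [intro t; reflexivity|].
  pose proof (is_derive_comp ln phi s (/ phi s) (Derive phi s) (is_derive_ln _ Hp)
     (Derive_correct _ _ Hd)) as H.
  unfold scal in H; simpl in H; unfold mult in H; simpl in H.
  unfold Rdiv. exact H.
Qed.

Definition ell (b : R) (j : nat) (psi : R -> R) (s : R) : R :=
  match j with
  | O => psi s
  | S O => b * psi s - Derive psi s
  | _ => b * psi s + Derive psi s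
  end.

Lemma Va_char b phi : Va b phi <-> C2T phi /\ forall j s, 0 < ell b j phi s.
Proof.
  split.
  - intros [HC [Hp Hd]]. split; auto. intros j s.
    assert (Hs := Hd s). rewrite ln_deriv in Hs; [| apply HC | apply Hp].
    apply Rabs_def2 in Hs. destruct Hs as [H1 H2]. specialize (Hp s).
    assert (E : Derive phi s = (Derive phi s / phi s) * phi s) by (field; lra).
    destruct j as [|[|j]]; simpl; auto.
    + rewrite E. nra.
    + rewrite E. nra.
  - intros [HC Hj]. split; [auto|]. split; [intro s; apply (Hj 0%nat)|].
    intro s. rewrite ln_deriv; [| apply HC | apply (Hj 0%nat)].
    pose proof (Hj 0%nat s) as H0. pose proof (Hj 1%nat s) as H1.
    pose proof (Hj 2%nat s) as H2. simpl in *.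
    apply Rabs_def1.
    + apply (Rmult_lt_reg_r (phi s)); auto. unfold Rdiv.
      rewrite Rmult_assoc, Rinv_l by lra. lra.
    + apply (Rmult_lt_reg_r (phi s)); auto. unfold Rdiv.
      rewrite Rmult_assoc, Rinv_l by lra. lra.
Qed.

Lemma Va_mono a b phi : a <= b -> Va a phi -> Va b phi.
Proof.
  intros Hab [HC [Hp Hd]]. split; auto. split; auto. intro s.
  specialize (Hd s). lra.
Qed.

Lemma Derive_lin (f g : R -> R) al be s : ex_derive f s -> ex_derive g s ->
  Derive (fun s => al * f s - be * g s) s = al * Derive f s - be * Derive g s.
Proof.
  intros Hf Hg. apply is_derive_unique.
  apply (is_derive_minus (fun s => al * f s) (fun s => be * g s) s);
  apply is_derive_scal; now apply Derive_correct.
Qed.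

Lemma ex_derive_lin (f g : R -> R) al be s : ex_derive f s -> ex_derive g s ->
  ex_derive (fun s => al * f s - be * g s) s.
Proof.
  intros Hf Hg.
  apply (ex_derive_minus (fun s => al * f s) (fun s => be * g s) s);
  now apply ex_derive_scal.
Qed.

Lemma cont_lin (f g : R -> R) al be s : continuous f s -> continuous g s ->
  continuous (fun s => al * f s - be * g s) s.
Proof.
  intros Hf Hg.
  apply continuity_pt_filterlim in Hf. apply continuity_pt_filterlim in Hg.
  apply continuity_pt_filterlim.
  apply (continuity_pt_minus (fun s => al * f s) (fun s => be * g s) s);
  apply (continuity_pt_scal _ _ s); auto.
Qed.

Lemma C2T_lin f g al be : C2T f -> C2T g -> C2T (fun s => al * f s - be * g s).
Proof.
  intros [Pf Df] [Pg Dg]. split.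
  - intro s. now rewrite Pf, Pg.
  - assert (E1 : Derive (fun s => al * f s - be * g s) =
                 fun s => al * Derive f s - be * Derive g s).
    { apply functional_extensionality. intro s.
      apply Derive_lin; [apply Df|apply Dg]. }
    assert (E2 : Derive (fun s => al * Derive f s - be * Derive g s) =
                 fun s => al * Derive (Derive f) s - be * Derive (Derive g) s).
    { apply functional_extensionality. intro s.
      apply Derive_lin; [apply Df|apply Dg]. }
    intro s. rewrite E1, E2.
    destruct (Df s) as [Df1 [Df2 Df3]]. destruct (Dg s) as [Dg1 [Dg2 Dg3]].
    split; [|split].
    + apply ex_derive_lin; assumption.
    + apply ex_derive_lin; assumption.
    + apply cont_lin; assumption.
Qed.

Lemma C2T_scale f c : C2T f -> C2T (fun s => f s / c).
Proof.
  intro H. assert (E : (fun s => f s / c) = fun s => (/c) * f s - 0 * f s).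
  { apply functional_extensionality. intro s. unfold Rdiv. ring. }
  rewrite E. now apply C2T_lin.
Qed.

Lemma ell_scale b j f c s : ex_derive f s ->
  ell b j (fun s => f s / c) s = ell b j f s / c.
Proof.
  intro Hf.
  assert (E : Derive (fun s => f s / c) s = Derive f s / c).
  { rewrite (Derive_ext _ (fun s => (/c) * f s - 0 * f s)).
    - rewrite Derive_lin by auto. unfold Rdiv. ring.
    - intro t. unfold Rdiv. ring. }
  destruct j as [|[|j]]; simpl; try rewrite E; unfold Rdiv; ring.
Qed.

Lemma Va_scale b f c : 0 < c -> Va b f -> Va b (fun s => f s / c).
Proof.
  intros Hc H. apply Va_char in H. destruct H as [HC Hj]. apply Va_char.
  split. { now apply C2T_scale. }
  intros j s. rewrite ell_scale by apply HC.
  apply Rdiv_lt_0_compat; auto.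
Qed.

Lemma ell_lin b j (f g : R -> R) t s : ex_derive f s -> ex_derive g s ->
  ell b j (fun s => t * f s - g s) s = t * ell b j f s - ell b j g s.
Proof.
  intros Hf Hg.
  assert (E : Derive (fun s => t * f s - g s) s = t * Derive f s - Derive g s).
  { rewrite <- (Rmult_1_l (Derive g s)).
    rewrite <- Derive_lin by auto. apply Derive_ext. intro; ring. }
  destruct j as [|[|j]]; simpl; try rewrite E; ring.
Qed.

Lemma ratio_le a1 a2 t : 0 < a1 -> a2 < t * a1 -> a2 / a1 <= t.
Proof.
  intros H1 H2. apply (Rmult_le_reg_r a1); auto. unfold Rdiv.
  rewrite Rmult_assoc, Rinv_l by lra. lra.
Qed.

Lemma ratio_pos a1 a2 : 0 < a1 -> 0 < a2 -> 0 < a2 / a1.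
Proof. intros; apply Rdiv_lt_0_compat; auto. Qed.

Lemma beta_lb b psi1 psi2 : Va b psi1 -> (forall s, ex_derive psi2 s) ->
  forall j s, Rbar_le (Finite (ell b j psi2 s / ell b j psi1 s)) (beta b psi1 psi2).
Proof.
  intros H1 H2 j s. unfold beta.
  destruct (Glb_Rbar_correct (fun t => 0 < t /\ Va b (fun s => t * psi1 s - psi2 s)))
    as [_ H]. apply H. intros t [Ht HV]. apply Va_char in HV. destruct HV as [_ HV].
  specialize (HV j s). apply Va_char in H1. destruct H1 as [HC1 Hp1].
  rewrite ell_lin in HV by (apply HC1 || apply H2). simpl.
  apply ratio_le; auto. lra.
Qed.

Lemma beta_ub b psi1 psi2 t : Va b psi1 -> C2T psi2 -> 0 < t ->
  (forall j s, ell b j psi2 s < t * ell b j psi1 s) ->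
  Rbar_le (beta b psi1 psi2) (Finite t).
Proof.
  intros H1 H2 Ht Hl. unfold beta.
  destruct (Glb_Rbar_correct (fun t => 0 < t /\ Va b (fun s => t * psi1 s - psi2 s)))
    as [H _]. apply H. split; auto. apply Va_char in H1. destruct H1 as [HC1 Hp1].
  apply Va_char. split.
  - replace (fun s => t * psi1 s - psi2 s) with (fun s => t * psi1 s - 1 * psi2 s).
    + now apply C2T_lin.
    + apply functional_extensionality. intro; ring.
  - intros j s. rewrite ell_lin by (apply HC1 || apply H2). specialize (Hl j s). lra.
Qed.

Lemma Rbar_le_gt (be : Rbar) m : (forall t, m < t -> Rbar_le be (Finite t)) ->
  Rbar_le be (Finite m).
Proof.
  intro H. destruct be as [v| |]; simpl; auto.
  - destruct (Rle_dec v m) as [Hl|Hl]; auto.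
    specialize (H ((v + m) / 2)). simpl in H. lra.
  - specialize (H (m + 1)). simpl in H. apply H. lra.
Qed.

Definition Rat b (psi1 psi2 : R -> R) j s := ell b j psi2 s / ell b j psi1 s.

Lemma theta_lower b psi1 psi2 c : Va b psi1 -> Va b psi2 ->
  Rbar_le (theta b psi1 psi2) (Finite c) ->
  forall j1 s1 j2 s2, ln (Rat b psi1 psi2 j1 s1) + ln (Rat b psi2 psi1 j2 s2) <= c.
Proof.
  intros H1 H2 Ht j1 s1 j2 s2.
  pose proof (beta_lb b psi1 psi2 H1 (fun s => proj1 (proj2 (proj1 H2) s))) as B1.
  pose proof (beta_lb b psi2 psi1 H2 (fun s => proj1 (proj2 (proj1 H1) s))) as B2.
  specialize (B1 j1 s1). specialize (B2 j2 s2).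
  apply Va_char in H1. apply Va_char in H2.
  destruct H1 as [_ P1]. destruct H2 as [_ P2].
  assert (Q1 : 0 < Rat b psi1 psi2 j1 s1) by (apply ratio_pos; auto).
  assert (Q2 : 0 < Rat b psi2 psi1 j2 s2) by (apply ratio_pos; auto).
  unfold theta in Ht.
  destruct (beta b psi1 psi2) as [u| |]; destruct (beta b psi2 psi1) as [v| |];
    simpl in *; try contradiction.
  unfold Rat in *.
  pose proof (ln_le _ _ Q1 B1). pose proof (ln_le _ _ Q2 B2). lra.
Qed.

Lemma theta_upper b psi1 psi2 c : Va b psi1 -> Va b psi2 ->
  (forall j1 s1 j2 s2, ln (Rat b psi1 psi2 j1 s1) + ln (Rat b psi2 psi1 j2 s2) <= c) ->
  Rbar_le (theta b psi1 psi2) (Finite c).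
Proof.
  intros H1 H2 Hc.
  pose proof (beta_lb b psi1 psi2 H1 (fun s => proj1 (proj2 (proj1 H2) s)) 0%nat 0) as B1.
  pose proof (beta_lb b psi2 psi1 H2 (fun s => proj1 (proj2 (proj1 H1) s)) 0%nat 0) as B2.
  pose proof H1 as H1'. pose proof H2 as H2'.
  apply Va_char in H1'. apply Va_char in H2'.
  destruct H1' as [C1 P1]. destruct H2' as [C2 P2].
  assert (Q1 : forall j s, 0 < Rat b psi1 psi2 j s) by (intros; apply ratio_pos; auto).
  assert (Q2 : forall j s, 0 < Rat b psi2 psi1 j s) by (intros; apply ratio_pos; auto).
  assert (Hp : forall j1 s1 j2 s2,
     Rat b psi1 psi2 j1 s1 * Rat b psi2 psi1 j2 s2 <= exp c).
  { intros. rewrite <- (exp_ln (_ * _)) by (apply Rmult_lt_0_compat; auto).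
    rewrite ln_mult by auto. specialize (Hc j1 s1 j2 s2).
    destruct (Rle_lt_or_eq_dec _ _ Hc) as [Hl|Hl].
    + left. now apply exp_increasing.
    + rewrite Hl. lra. }
  set (E2 := fun r => exists j s, r = Rat b psi2 psi1 j s).
  destruct (Lub_Rbar_correct E2) as [Hub Hlub].
  assert (Lo : Rbar_le (Finite (Rat b psi2 psi1 0%nat 0)) (Lub_Rbar E2)).
  { apply Hub. exists 0%nat, 0. auto. }
  assert (Up : forall j s, Rbar_le (Lub_Rbar E2) (Finite (exp c / Rat b psi1 psi2 j s))).
  { intros j s. apply Hlub. intros r [j2 [s2 ->]]. simpl.
    specialize (Hp j s j2 s2). specialize (Q1 j s).
    apply (Rmult_le_reg_l (Rat b psi1 psi2 j s)); auto.
    unfold Rdiv. rewrite <- Rmult_assoc, (Rmult_comm _ (exp c)), Rmult_assoc, Rinv_r by lra.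
    lra. }
  pose proof (Up 0%nat 0) as Up0.
  destruct (Lub_Rbar E2) as [m| |] eqn:Em; simpl in Lo, Up0; try contradiction.
  assert (Hm : 0 < m) by (specialize (Q2 0%nat 0); lra).
  assert (Hb2 : Rbar_le (beta b psi2 psi1) (Finite m)).
  { apply Rbar_le_gt. intros t Ht. apply beta_ub; auto; [lra|].
    intros j s. assert (Rat b psi2 psi1 j s <= m).
    { change (Rbar_le (Finite (Rat b psi2 psi1 j s)) (Finite m)).
      apply Hub. exists j, s. auto. }
    unfold Rat in H. specialize (P2 j s).
    assert (ell b j psi1 s / ell b j psi2 s * ell b j psi2 s = ell b j psi1 s)
      by (field; lra).
    nra. }
  assert (Hb1 : Rbar_le (beta b psi1 psi2) (Finite (exp c / m))).
  { apply Rbar_le_gt. intros t Ht.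
    assert (0 < exp c / m) by (apply Rdiv_lt_0_compat; auto; apply exp_pos).
    apply beta_ub; auto; [lra|].
    intros j s. assert (Rat b psi1 psi2 j s <= exp c / m).
    { specialize (Up j s). simpl in Up. specialize (Q1 j s).
      apply (Rmult_le_reg_r m); auto. unfold Rdiv.
      rewrite Rmult_assoc, Rinv_l by lra.
      apply (Rmult_le_reg_l (/ Rat b psi1 psi2 j s)). apply Rinv_0_lt_compat; auto.
      rewrite <- Rmult_assoc, Rinv_l by lra. rewrite Rmult_1_l.
      unfold Rdiv in Up. lra. }
    unfold Rat in H0. specialize (P1 j s).
    assert (ell b j psi2 s / ell b j psi1 s * ell b j psi1 s = ell b j psi2 s)
      by (field; lra).
    nra. }
  unfold theta.
  destruct (beta b psi1 psi2) as [u| |]; destruct (beta b psi2 psi1) as [v| |];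
    simpl in *; try contradiction.
  specialize (Q1 0%nat 0). specialize (Q2 0%nat 0). unfold Rat in Q1, Q2.
  unfold Rat, ell in *. assert (Hu : 0 < u) by lra. assert (Hv : 0 < v) by lra.
  rewrite <- ln_mult by auto. rewrite <- (ln_exp c).
  apply ln_le. apply Rmult_lt_0_compat; auto.
  assert (u * v <= exp c / m * m) by (apply Rmult_le_compat; lra).
  replace (exp c / m * m) with (exp c) in H by (field; lra). exact H.
Qed.

Lemma Derive_along (f : (nat -> R) -> R) x i s :
  Derive (fun t => f (upd x i t)) s = partial i f (upd x i s).
Proof.
  unfold partial. rewrite upd_same. apply Derive_ext. intro t.
  now rewrite upd_upd_same.
Qed.

Lemma is_along (f : (nat -> R) -> R) x i s : (forall z, ex_derive (fun t => f (upd z i t)) (z i)) ->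
  is_derive (fun t => f (upd x i t)) s (partial i f (upd x i s)).
Proof.
  intro H. rewrite <- Derive_along. apply Derive_correct.
  specialize (H (upd x i s)). rewrite upd_same in H.
  eapply ex_derive_ext; [|exact H]. intro t. simpl. now rewrite upd_upd_same.
Qed.

Lemma ex_along (f : (nat -> R) -> R) x i s : (forall z, ex_derive (fun t => f (upd z i t)) (z i)) ->
  ex_derive (fun t => f (upd x i t)) s.
Proof. intro H. eexists. now apply is_along. Qed.

Lemma contN_along N (g : (nat -> R) -> R) x i s : contN N g -> continuous (fun t => g (upd x i t)) s.
Proof.
  intro H. apply continuity_pt_filterlim. intros eps Heps.
  destruct (H (upd x i s) eps Heps) as [d [Hd Hy]].
  exists d. split; auto. intros y [_ Hys]. simpl in *. unfold R_dist in *.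
  apply Hy. intros j Hj. unfold upd. destruct (Nat.eqb j i).
  - exact Hys.
  - rewrite Rminus_eq_0, Rabs_R0. exact Hd.
Qed.


Definition F (b : R) (i : nat) (eta : (nat -> R) -> R) (j : nat) (y : nat -> R) : R :=
  match j with
  | O => eta y
  | S O => b * eta y - partial i eta y
  | _ => b * eta y + partial i eta y
  end.

Definition G (b : R) (i k : nat) (eta : (nat -> R) -> R) (j : nat) (y : nat -> R) : R :=
  match j with
  | O => partial k eta y
  | S O => b * partial k eta y - partial k (partial i eta) y
  | _ => b * partial k eta y + partial k (partial i eta) y
  end.

Lemma ell_slice b i eta j x s : ell b j (slice i eta x) s = F b i eta j (upd x i s).
Proof.
  unfold slice. destruct j as [|[|j]]; simpl; auto; now rewrite Derive_along.
Qed.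

Lemma slice_C2T N eta i x : torus_fun N eta -> C2N N eta -> (i < N)%nat ->
  C2T (slice i eta x).
Proof.
  intros [_ Ht] [_ HC] Hi. destruct (HC i i Hi Hi) as [E1 [E2 [_ C3]]].
  split.
  - intro s. unfold slice. specialize (Ht (upd x i s) i Hi).
    rewrite upd_same, upd_upd_same in Ht. exact Ht.
  - assert (D1 : Derive (slice i eta x) = fun s => partial i eta (upd x i s)).
    { apply functional_extensionality. intro s. apply Derive_along. }
    assert (D2 : Derive (fun s => partial i eta (upd x i s)) =
                 fun s => partial i (partial i eta) (upd x i s)).
    { apply functional_extensionality. intro s. apply Derive_along. }
    intro s. rewrite D1, D2. split; [|split].
    + apply ex_along; auto.
    + apply ex_along; auto.
    + apply (contN_along N); auto.
Qed.

Lemma slice_cont N eta i x s : C2N N eta -> (i < N)%nat -> continuous (slice i eta x) s.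
Proof.
  intros [_ HC] Hi. destruct (HC i i Hi Hi) as [E1 _].
  apply (@ex_derive_continuous R_AbsRing R_NormedModule). unfold slice.
  apply ex_along; auto.
Qed.

Lemma cst_pos N eta i x : C2N N eta -> (i < N)%nat -> (forall y, 0 < eta y) ->
  0 < RInt (slice i eta x) 0 1.
Proof.
  intros HC Hi Hp. apply RInt_gt_0; [lra| |].
  - intros; unfold slice; auto.
  - intros; eapply slice_cont; eauto.
Qed.

Lemma rho_eq i eta x :
  rho_cond i eta x = fun s => slice i eta x s / RInt (slice i eta x) 0 1.
Proof. reflexivity. Qed.

Lemma Va_rho_iff N eta a i x : C2N N eta -> (i < N)%nat -> (forall y, 0 < eta y) ->
  Va a (rho_cond i eta x) <-> Va a (slice i eta x).
Proof.
  intros HC Hi Hp. pose proof (cst_pos N eta i x HC Hi Hp) as Hc.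
  rewrite rho_eq. split; intro H.
  - apply (Va_scale a _ (/ RInt (slice i eta x) 0 1)) in H.
    + replace (slice i eta x) with
        (fun s => slice i eta x s / RInt (slice i eta x) 0 1 / / RInt (slice i eta x) 0 1).
      * exact H.
      * apply functional_extensionality. intro s. field. lra.
    + now apply Rinv_0_lt_compat.
  - now apply Va_scale.
Qed.

Lemma ell_rho N eta b i j x s : C2N N eta -> (i < N)%nat ->
  ell b j (rho_cond i eta x) s = F b i eta j (upd x i s) / RInt (slice i eta x) 0 1.
Proof.
  intros [_ HC] Hi. rewrite rho_eq, ell_scale, ell_slice; auto.
  destruct (HC i i Hi Hi) as [E1 _]. unfold slice. apply ex_along; auto.
Qed.

Lemma derF N eta b i k j y t : C2N N eta -> (i < N)%nat -> (k < N)%nat ->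
  is_derive (fun t => F b i eta j (upd y k t)) t (G b i k eta j (upd y k t)).
Proof.
  intros [_ HC] Hi Hk.
  destruct (HC k k Hk Hk) as [Ek _]. destruct (HC i k Hi Hk) as [_ [Eik _]].
  pose proof (is_along eta y k t Ek) as D0.
  pose proof (is_along (partial i eta) y k t Eik) as D1.
  destruct j as [|[|j]]; simpl.
  - exact D0.
  - apply (is_derive_minus (fun t => b * eta (upd y k t))
             (fun t => partial i eta (upd y k t))); auto.
    now apply is_derive_scal.
  - apply (is_derive_plus (fun t => b * eta (upd y k t))
             (fun t => partial i eta (upd y k t))); auto.
    now apply is_derive_scal.
Qed.

Lemma derlnF N eta b i k j y t : C2N N eta -> (i < N)%nat -> (k < N)%nat ->
  0 < F b i eta j (upd y k t) ->
  is_derive (fun t => ln (F b i eta j (upd y k t))) t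
     (G b i k eta j (upd y k t) / F b i eta j (upd y k t)).
Proof.
  intros HC Hi Hk Hp.
  pose proof (is_derive_comp ln (fun t => F b i eta j (upd y k t)) t _ _
     (is_derive_ln _ Hp) (derF N eta b i k j y t HC Hi Hk)) as H.
  unfold scal in H; simpl in H; unfold mult in H; simpl in H.
  unfold Rdiv. exact H.
Qed.

Lemma qmax_ge i k b eta x s j :
  G b i k eta j (upd x i s) / F b i eta j (upd x i s) <= quot_max i k b eta x s.
Proof.
  unfold quot_max. destruct j as [|[|j]]; simpl.
  - apply Rmax_l.
  - eapply Rle_trans; [|apply Rmax_r]. apply Rmax_l.
  - eapply Rle_trans; [|apply Rmax_r]. apply Rmax_r.
Qed.

Lemma qmin_le i k b eta x s j :
  quot_min i k b eta x s <= G b i k eta j (upd x i s) / F b i eta j (upd x i s).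
Proof.
  unfold quot_min. destruct j as [|[|j]]; simpl.
  - apply Rmin_l.
  - eapply Rle_trans; [apply Rmin_r|]. apply Rmin_l.
  - eapply Rle_trans; [apply Rmin_r|]. apply Rmin_r.
Qed.

Lemma qmax_is i k b eta x s : exists j,
  quot_max i k b eta x s = G b i k eta j (upd x i s) / F b i eta j (upd x i s).
Proof.
  unfold quot_max. unfold Rmax at 1.
  destruct (Rle_dec _ _).
  - unfold Rmax. destruct (Rle_dec _ _).
    + exists 2%nat. reflexivity.
    + exists 1%nat. reflexivity.
  - exists 0%nat. reflexivity.
Qed.

Lemma qmin_is i k b eta x s : exists j,
  quot_min i k b eta x s = G b i k eta j (upd x i s) / F b i eta j (upd x i s).
Proof.
  unfold quot_min. unfold Rmin at 1.
  destruct (Rle_dec _ _).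
  - exists 0%nat. reflexivity.
  - unfold Rmin. destruct (Rle_dec _ _).
    + exists 1%nat. reflexivity.
    + exists 2%nat. reflexivity.
Qed.

Definition Pair i k b eta L x := forall j1 j2 s1 s2,
  G b i k eta j1 (upd x i s1) / F b i eta j1 (upd x i s1)
  - G b i k eta j2 (upd x i s2) / F b i eta j2 (upd x i s2) <= L.

Lemma ii_to_P i k b eta L x :
  Rbar_le (Rbar_minus (A_ik i k b eta x) (B_ik i k b eta x)) (Finite L) ->
  Pair i k b eta L x.
Proof.
  intros H j1 j2 s1 s2.
  pose proof (qmax_ge i k b eta x s1 j1). pose proof (qmin_le i k b eta x s2 j2).
  assert (HA : Rbar_le (Finite (quot_max i k b eta x s1)) (A_ik i k b eta x)).
  { unfold A_ik. destruct (Lub_Rbar_correct (fun v => exists s, v = quot_max i k b eta x s)) as [Hu _].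
    apply Hu. eauto. }
  assert (HB : Rbar_le (B_ik i k b eta x) (Finite (quot_min i k b eta x s2))).
  { unfold B_ik. destruct (Glb_Rbar_correct (fun v => exists s, v = quot_min i k b eta x s)) as [Hu _].
    apply Hu. eauto. }
  destruct (A_ik i k b eta x) as [A| |]; destruct (B_ik i k b eta x) as [B| |];
    simpl in *; try contradiction. lra.
Qed.

Lemma P_to_ii i k b eta L x : Pair i k b eta L x ->
  Rbar_le (Rbar_minus (A_ik i k b eta x) (B_ik i k b eta x)) (Finite L).
Proof.
  intro HP.
  assert (HP' : forall s1 s2, quot_max i k b eta x s1 - quot_min i k b eta x s2 <= L).
  { intros s1 s2. destruct (qmax_is i k b eta x s1) as [j1 ->].
    destruct (qmin_is i k b eta x s2) as [j2 ->]. apply HP. }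
  unfold A_ik, B_ik.
  set (EA := fun v => exists s, v = quot_max i k b eta x s).
  set (EB := fun v => exists s, v = quot_min i k b eta x s).
  destruct (Lub_Rbar_correct EA) as [Au Al].
  destruct (Glb_Rbar_correct EB) as [Bl Bg].
  assert (B1 : Rbar_le (Glb_Rbar EB) (Finite (quot_min i k b eta x 0))).
  { apply Bl. exists 0. auto. }
  assert (B2 : Rbar_le (Finite (quot_max i k b eta x 0 - L)) (Glb_Rbar EB)).
  { apply Bg. intros v [s ->]. simpl. specialize (HP' 0 s). lra. }
  destruct (Glb_Rbar EB) as [B| |] eqn:EBv; simpl in B1, B2; try contradiction.
  assert (A1 : Rbar_le (Finite (quot_max i k b eta x 0)) (Lub_Rbar EA)).
  { apply Au. exists 0. auto. }
  assert (A2 : Rbar_le (Lub_Rbar EA) (Finite (B + L))).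
  { apply Al. intros v [s ->]. simpl.
    assert (Rbar_le (Finite (quot_max i k b eta x s - L)) (Finite B)).
    { apply Bg. intros v [s' ->]. simpl. specialize (HP' s s'). lra. }
    simpl in H. lra. }
  destruct (Lub_Rbar EA) as [A| |]; simpl in A1, A2 |- *; try contradiction. lra.
Qed.

Definition psi i k eta (x : nat -> R) t := rho_cond i eta (upd x k t).

Lemma ell_psi N eta b i k j x t s : C2N N eta -> (i < N)%nat -> k <> i ->
  ell b j (psi i k eta x t) s =
  F b i eta j (upd (upd x i s) k t) / RInt (slice i eta (upd x k t)) 0 1.
Proof.
  intros HC Hi Hki. unfold psi. rewrite (ell_rho N) by auto.
  now rewrite upd_comm by auto.
Qed.

Lemma Fpos (eta : (nat -> R) -> R) a b i k j x s t : a <= b -> k <> i ->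
  (forall z, Va a (slice i eta z)) -> 0 < F b i eta j (upd (upd x i s) k t).
Proof.
  intros Hab Hki HV. rewrite <- upd_comm by auto. rewrite <- ell_slice.
  pose proof (Va_mono a b _ Hab (HV (upd x k t))) as H.
  apply Va_char in H. apply H.
Qed.

Lemma lnR_eq N eta a b i k x t t' j1 s1 j2 s2 :
  C2N N eta -> (i < N)%nat -> k <> i -> (forall y, 0 < eta y) -> a <= b ->
  (forall z, Va a (slice i eta z)) ->
  ln (Rat b (psi i k eta x t) (psi i k eta x t') j1 s1)
  + ln (Rat b (psi i k eta x t') (psi i k eta x t) j2 s2)
  = (ln (F b i eta j1 (upd (upd x i s1) k t')) - ln (F b i eta j2 (upd (upd x i s2) k t')))
  - (ln (F b i eta j1 (upd (upd x i s1) k t)) - ln (F b i eta j2 (upd (upd x i s2) k t))).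
Proof.
  intros HC Hi Hki Hp Hab HV. unfold Rat. rewrite !(ell_psi N) by auto.
  pose proof (cst_pos N eta i (upd x k t) HC Hi Hp) as c1.
  pose proof (cst_pos N eta i (upd x k t') HC Hi Hp) as c2.
  pose proof (Fpos eta a b i k j1 x s1 t Hab Hki HV).
  pose proof (Fpos eta a b i k j1 x s1 t' Hab Hki HV).
  pose proof (Fpos eta a b i k j2 x s2 t Hab Hki HV).
  pose proof (Fpos eta a b i k j2 x s2 t' Hab Hki HV).
  rewrite !ln_div; try apply Rdiv_lt_0_compat; auto. ring.
Qed.

Lemma g_deriv N eta a b i k x j1 s1 j2 s2 t :
  C2N N eta -> (i < N)%nat -> (k < N)%nat -> k <> i -> a <= b ->
  (forall z, Va a (slice i eta z)) ->
  is_derive (fun t => ln (F b i eta j1 (upd (upd x i s1) k t))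
                      - ln (F b i eta j2 (upd (upd x i s2) k t))) t
    (G b i k eta j1 (upd (upd x i s1) k t) / F b i eta j1 (upd (upd x i s1) k t)
     - G b i k eta j2 (upd (upd x i s2) k t) / F b i eta j2 (upd (upd x i s2) k t)).
Proof.
  intros HC Hi Hk Hki Hab HV.
  apply (is_derive_minus (fun t => ln (F b i eta j1 (upd (upd x i s1) k t)))
                         (fun t => ln (F b i eta j2 (upd (upd x i s2) k t))));
  apply (derlnF N); auto; eapply Fpos; eauto.
Qed.

Lemma core_suff N eta a b L i k :
  C2N N eta -> (i < N)%nat -> (k < N)%nat -> k <> i -> (forall y, 0 < eta y) ->
  a <= b -> (forall z, Va a (slice i eta z)) -> (forall z, Pair i k b eta L z) ->
  forall x t t', Rbar_le (theta b (psi i k eta x t) (psi i k eta x t'))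
                         (Finite (L * Rabs (t' - t))).
Proof.
  intros HC Hi Hk Hki Hp Hab HV HP x t t'.
  assert (Vp : forall u, Va b (psi i k eta x u)).
  { intro u. unfold psi. apply Va_mono with a; auto.
    apply (Va_rho_iff N); auto. }
  apply theta_upper; auto.
  intros j1 s1 j2 s2. rewrite (lnR_eq N eta a) by auto.
  set (g := fun t => ln (F b i eta j1 (upd (upd x i s1) k t))
                      - ln (F b i eta j2 (upd (upd x i s2) k t))).
  set (df := fun t => G b i k eta j1 (upd (upd x i s1) k t) / F b i eta j1 (upd (upd x i s1) k t)
     - G b i k eta j2 (upd (upd x i s2) k t) / F b i eta j2 (upd (upd x i s2) k t)).
  assert (D : forall u, is_derive g u (df u)).
  { intro u. unfold g, df. apply (g_deriv N eta a); auto. }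
  assert (Bd : forall u, Rabs (df u) <= L).
  { intro u. apply Rabs_le. split.
    - pose proof (HP (upd x k u) j2 j1 s2 s1) as H.
      rewrite !(upd_comm x k i) in H by auto. unfold df. lra.
    - pose proof (HP (upd x k u) j1 j2 s1 s2) as H.
      rewrite !(upd_comm x k i) in H by auto. unfold df. lra. }
  destruct (MVT_gen g t t' df) as [c [_ Hc]].
  - intros; apply D.
  - intros u _. apply continuity_pt_filterlim.
    apply (@ex_derive_continuous R_AbsRing R_NormedModule). eexists. apply D.
  - change (g t' - g t <= L * Rabs (t' - t)). rewrite Hc.
    eapply Rle_trans; [apply Rle_abs|]. rewrite Rabs_mult.
    apply Rmult_le_compat_r; [apply Rabs_pos|apply Bd].
Qed.

Lemma deriv_le g t d L : is_derive g t d ->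
  (forall h, 0 < h < 1 -> g (t + h) - g t <= L * h) -> d <= L.
Proof.
  intros Hd Hh. apply is_derive_Reals in Hd.
  destruct (Rle_dec d L) as [|Hn]; auto. exfalso.
  destruct (Hd (d - L)) as [del Hdel]; [lra|].
  set (h := Rmin (del / 2) (1 / 2)).
  assert (Hpos : 0 < h) by (unfold h; apply Rmin_pos; pose proof (cond_pos del); lra).
  assert (Hlt : h < del) by (unfold h; pose proof (Rmin_l (del/2) (1/2)); pose proof (cond_pos del); lra).
  assert (H1 : h < 1) by (unfold h; pose proof (Rmin_r (del/2) (1/2)); lra).
  specialize (Hdel h). specialize (Hh h (conj Hpos H1)).
  assert (Q : (g (t + h) - g t) / h <= L).
  { apply (Rmult_le_reg_r h); auto. unfold Rdiv. rewrite Rmult_assoc, Rinv_l by lra. lra. }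
  assert (h <> 0) by lra. assert (Rabs h < del) by (rewrite Rabs_right; lra).
  specialize (Hdel H H0). apply Rabs_def2 in Hdel. lra.
Qed.

Lemma tdist_le s t : tdist s t <= Rabs (s - t).
Proof.
  unfold tdist, frac_part. set (d := s - t).
  destruct (base_Int_part d) as [H1 H2].
  destruct (Rle_dec 0 d).
  - rewrite Rabs_right by lra. eapply Rle_trans; [apply Rmin_l|].
    assert (IZR (Int_part d) >= 0).
    { assert (-1 < IZR (Int_part d)) by lra.
      apply lt_IZR in H. apply Rle_ge. apply IZR_le. lia. }
    lra.
  - rewrite Rabs_left by lra. eapply Rle_trans; [apply Rmin_r|].
    assert (IZR (Int_part d) <= -1).
    { assert (IZR (Int_part d) < 0) by lra.
      apply lt_IZR in H. apply IZR_le. lia. }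
    lra.
Qed.

Lemma core_nec N eta a b L i k :
  C2N N eta -> (i < N)%nat -> (k < N)%nat -> k <> i -> (forall y, 0 < eta y) ->
  a <= b -> 0 <= L -> InM i k a b L eta -> forall x, Pair i k b eta L x.
Proof.
  intros HC Hi Hk Hki Hp Hab HL [HV Ht] x j1 j2 s1 s2.
  assert (HVs : forall z, Va a (slice i eta z)).
  { intro z. apply (Va_rho_iff N); auto. }
  assert (Vp : forall u, Va b (psi i k eta x u)).
  { intro u. unfold psi. apply Va_mono with a; auto. }
  pose proof (g_deriv N eta a b i k x j1 s1 j2 s2 (x k) HC Hi Hk Hki Hab HVs) as D.
  assert (E : forall s, upd (upd x i s) k (x k) = upd x i s).
  { intro s. rewrite <- (upd_other x i s k) by auto. apply upd_id. }
  rewrite !E in D.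
  eapply deriv_le; [exact D|].
  intros h [h0 h1].
  specialize (Ht x (upd x k (x k + h))).
  assert (Ex : rho_cond i eta x = psi i k eta x (x k)) by (unfold psi; now rewrite upd_id).
  rewrite Ex in Ht. fold (psi i k eta x (x k + h)) in Ht.
  assert (Hd : forall j, j <> k -> x j = upd x k (x k + h) j).
  { intros j Hj. now rewrite upd_other. }
  specialize (Ht Hd). rewrite upd_same in Ht.
  assert (Rbar_le (theta b (psi i k eta x (x k)) (psi i k eta x (x k + h))) (Finite (L * h))).
  { eapply Rbar_le_trans; [exact Ht|]. simpl. apply Rmult_le_compat_l; auto.
    eapply Rle_trans; [apply tdist_le|]. rewrite Rabs_left by lra. lra. }
  pose proof (theta_lower b _ _ _ (Vp _) (Vp _) H j1 s1 j2 s2) as T.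
  rewrite (lnR_eq N eta a) in T by auto. rewrite !E in T. simpl. rewrite !E. exact T.
Qed.

Lemma psi_1 N eta i k x t : torus_fun N eta -> (k < N)%nat -> k <> i ->
  psi i k eta x (t + 1) = psi i k eta x t.
Proof.
  intros [_ Ht] Hk Hki. unfold psi. rewrite !rho_eq.
  assert (E : slice i eta (upd x k (t + 1)) = slice i eta (upd x k t)).
  { apply functional_extensionality. intro s. unfold slice.
    specialize (Ht (upd (upd x k t) i s) k Hk).
    rewrite upd_other in Ht by auto. rewrite upd_same in Ht.
    rewrite <- Ht. f_equal. rewrite !(upd_comm x k i) by auto.
    now rewrite upd_upd_same. }
  now rewrite E.
Qed.

Lemma psi_nat N eta i k x t n : torus_fun N eta -> (k < N)%nat -> k <> i ->
  psi i k eta x (t + INR n) = psi i k eta x t.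
Proof.
  intros Ht Hk Hki. induction n.
  - simpl. now rewrite Rplus_0_r.
  - rewrite S_INR. replace (t + (INR n + 1)) with ((t + INR n) + 1) by ring.
    rewrite (psi_1 N) by auto. exact IHn.
Qed.

Lemma psi_Z N eta i k x t z : torus_fun N eta -> (k < N)%nat -> k <> i ->
  psi i k eta x (t + IZR z) = psi i k eta x t.
Proof.
  intros Ht Hk Hki. destruct z as [|p|p].
  - simpl. now rewrite Rplus_0_r.
  - change (IZR (Z.pos p)) with (IPR p). rewrite <- INR_IPR.
    apply (psi_nat N); auto.
  - rewrite IZR_NEG. change (IZR (Z.pos p)) with (IPR p). rewrite <- INR_IPR.
    rewrite <- (psi_nat N eta i k x (t + - INR (Pos.to_nat p)) (Pos.to_nat p)) by auto.
    f_equal. ring.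
Qed.

Theorem propositionC1 (N : nat) (eta : (nat -> R) -> R) (a b L : R) (i k : nat)
  (Htor : torus_fun N eta) (HC2 : C2N N eta) (Hpos : forall x, 0 < eta x)
  (Ha : 0 <= a) (Hab : a <= b) (HL : 0 <= L)
  (Hi : (i < N)%nat) (Hk : (k < N)%nat) (Hki : k <> i) :
  InM i k a b L eta <->
  ((forall x, Va a (slice i eta x)) /\
   (forall x, Rbar_le (Rbar_minus (A_ik i k b eta x) (B_ik i k b eta x))
                      (Finite L))).
Proof.
  split.
  - intro H. split.
    + intro x. apply (Va_rho_iff N); auto. apply H.
    + intro x. apply P_to_ii. apply (core_nec N eta a); auto.
  - intros [HV HA]. split.
    + intro x. apply (Va_rho_iff N); auto.
    + intros x x' Hxx.
      assert (HP : forall z, Pair i k b eta L z) by (intro z; apply ii_to_P, HA).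
      assert (Ex : rho_cond i eta x = psi i k eta x (x k)) by (unfold psi; now rewrite upd_id).
      assert (Ex' : rho_cond i eta x' = psi i k eta x (x' k)).
      { unfold psi. f_equal. apply functional_extensionality. intro j. unfold upd.
        destruct (Nat.eqb_spec j k); subst; auto. symmetry; auto. }
      rewrite Ex, Ex'. set (t := x k). set (t' := x' k).
      pose proof (core_suff N eta a b L i k HC2 Hi Hk Hki Hpos Hab HV HP x t) as C.
      set (d := t - t').
      assert (Hf : frac_part d = d - IZR (Int_part d)) by reflexivity.
      destruct (base_fp d) as [F0 F1].
      unfold tdist. fold d.
      assert (B1 : Rbar_le (theta b (psi i k eta x t) (psi i k eta x t'))
                           (Finite (L * frac_part d))).
      { rewrite <- (psi_Z N eta i k x t' (Int_part d)) by auto.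
        eapply Rbar_le_trans; [apply C|]. simpl. right. f_equal.
        rewrite Rabs_left1; assert (d = t - t') by reflexivity; lra. }
      assert (B2 : Rbar_le (theta b (psi i k eta x t) (psi i k eta x t'))
                           (Finite (L * (1 - frac_part d)))).
      { rewrite <- (psi_Z N eta i k x t' (Int_part d + 1)) by auto.
        eapply Rbar_le_trans; [apply C|]. simpl. right. f_equal.
        rewrite plus_IZR. simpl.
        rewrite Rabs_right; assert (d = t - t') by reflexivity; lra. }
      unfold Rmin. destruct (Rle_dec _ _); auto.
Qed.
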